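(* Let $K$ be a field and $\beta<\alpha$ countable ordinals. Then there is a $K$-algebra isomorphism $B_{\alpha,1}\cong B_{\beta,1}\boxplus B_{\alpha,1}$.
   Context: For a sequence $\mathcal R=(R_i\mid i\in A)$ of $K$-algebras indexed by an infinite set $A$, $R(A,K,\mathcal R)$ is the $K$-subalgebra $\bigoplus_{i\in A}R_i\oplus1_P\cdot K$ of $P=\prod_{i\in A}R_i$; $\boxplus$ is ring direct product. Define $B_{0,1}=K$; $B_{\beta+1,1}=R(\aleph_0,K,\mathcal R)$ with $\mathcal R$ the constant sequence $R_m=B_{\beta,1}$ ($m<\aleph_0$); for limit $\alpha$, $B_{\alpha,1}=R(\alpha,K,(B_{\beta,1}\mid\beta<\alpha))$. *)

(* Defs.v *)
From Stdlib Require Import List ClassicalEpsilon.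
From mathcomp Require Import all_boot all_algebra.
Set Implicit Arguments. Unset Strict Implicit. Unset Printing Implicit Defensive.
Import GRing.Theory.
Local Open Scope ring_scope.

(* A (concrete) K-algebra presented as a subset [mem] of an ambient type [car]
   carrying pointwise operations (e.g. a subalgebra of a product algebra). *)
Record kalg (K : fieldType) := KAlg {
  car : Type;
  mem : car -> Prop;
  kzero : car;
  kone : car;
  kadd : car -> car -> car;
  kmul : car -> car -> car;
  kscale : K -> car -> car }.
Arguments car {K} k.
Arguments mem {K} k _.
Arguments kzero {K} k.
Arguments kone {K} k.
Arguments kadd {K} k _ _.
Arguments kmul {K} k _ _.
Arguments kscale {K} k _ _.

Section Constructions.
Variable K : fieldType.

Definition kalgK : kalg K :=
  @KAlg K K (fun _ => True) 0 1 +%R *%R *%R.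

Definition kprod (R S : kalg K) : kalg K :=
  @KAlg K (car R * car S)%type
    (fun x => mem R x.1 /\ mem S x.2)
    (kzero R, kzero S) (kone R, kone S)
    (fun x y => (kadd R x.1 y.1, kadd S x.2 y.2))
    (fun x y => (kmul R x.1 y.1, kmul S x.2 y.2))
    (fun k x => (kscale R k x.1, kscale S k x.2)).

(* R(I, K, (R_i)) = (⊕_i R_i) ⊕ 1_P·K  inside  P = ∏_i R_i. *)
Definition Rsum (I : Type) (F : I -> kalg K) : kalg K :=
  @KAlg K (forall i, car (F i))
    (fun f => exists (g : forall i, car (F i)) (k : K) (s : list I),
        (forall i, mem (F i) (g i)) /\
        (forall i, ~ In i s -> g i = kzero (F i)) /\
        (forall i, f i = kadd (F i) (g i) (kscale (F i) k (kone (F i)))))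
    (fun i => kzero (F i)) (fun i => kone (F i))
    (fun f g i => kadd (F i) (f i) (g i))
    (fun f g i => kmul (F i) (f i) (g i))
    (fun k f i => kscale (F i) k (f i)).

Definition kalg_iso (R S : kalg K) : Prop :=
  exists phi : car R -> car S,
    (forall x, mem R x -> mem S (phi x)) /\
    (forall x y, mem R x -> mem R y -> phi x = phi y -> x = y) /\
    (forall y, mem S y -> exists x, mem R x /\ phi x = y) /\
    phi (kone R) = kone S /\
    (forall x y, mem R x -> mem R y -> phi (kadd R x y) = kadd S (phi x) (phi y)) /\
    (forall x y, mem R x -> mem R y -> phi (kmul R x y) = kmul S (phi x) (phi y)) /\
    (forall k x, mem R x -> phi (kscale R k x) = kscale S k (phi x)).

(* Ordinals: a countable ordinal alpha is the order type of a well-ordered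
   type (A, lt); the ordinals <= alpha are indexed by option A, where
   Some a stands for the order type of {x | lt x a} and None for alpha. *)
Variables (A : Type) (lt : A -> A -> Prop).

Definition ltO (v w : option A) : Prop :=
  match v, w with
  | Some a, Some b => lt a b
  | Some _, None => True
  | None, _ => False
  end.

Lemma wf_ltO : well_founded lt -> well_founded ltO.
Proof.
intro wf.
assert (H : forall a, Acc ltO (Some a)).
{ intro a. induction (wf a) as [a _ IH]. constructor.
  intros [y|] Hy; [ apply IH; exact Hy | destruct Hy ]. }
intros [a|]; [ apply H | ].
constructor. intros [y|] Hy; [ apply H | destruct Hy ].
Qed.

(* One step of the transfinite recursion defining B_{w,1}:
   w = 0 (no predecessor): K;  w = m+1 (largest predecessor m):
   R(aleph_0, K, constant B_m);  w limit: R(w, K, (B_v | v < w)). *)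
Definition Bstep (w : option A) (rec : forall v, ltO v w -> kalg K) : kalg K :=
  match excluded_middle_informative (exists v, ltO v w) with
  | right _ => kalgK
  | left _ =>
    match excluded_middle_informative
            (exists m, ltO m w /\ forall v, ltO v w -> ~ ltO m v) with
    | left H =>
        let m := constructive_indefinite_description _ H in
        Rsum (fun _ : nat => rec (proj1_sig m) (proj1 (proj2_sig m)))
    | right _ =>
        Rsum (fun v : {v | ltO v w} => rec (proj1_sig v) (proj2_sig v))
    end
  end.

Definition B1 (wf : well_founded lt) (w : option A) : kalg K :=
  Fix (wf_ltO wf) (fun _ => kalg K) Bstep w.

End Constructions.

(* Main.v *)
From Pilot Require Import Defs.
From Stdlib Require Import List ClassicalEpsilon FunctionalExtensionality.
From Stdlib Require Eqdep.
From mathcomp Require Import all_boot all_algebra.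
Set Implicit Arguments. Unset Strict Implicit.
Import GRing.Theory.
Local Open Scope ring_scope.
Notation kmem := Pilot.Defs.mem.

Section Aux.
Variable K : fieldType.

Record good (R : kalg K) : Prop := {
 g_addA : forall x y z, kadd R x (kadd R y z) = kadd R (kadd R x y) z;
 g_addC : forall x y, kadd R x y = kadd R y x;
 g_add0 : forall x, kadd R (kzero R) x = x;
 g_scaleDr : forall a x y, kscale R a (kadd R x y) = kadd R (kscale R a x) (kscale R a y);
 g_scaleDl : forall a b x, kscale R (a+b) x = kadd R (kscale R a x) (kscale R b x);
 g_scaleA : forall a b x, kscale R a (kscale R b x) = kscale R (a*b) x;
 g_scale0 : forall x, kscale R 0 x = kzero R;
 g_scale1 : forall x, kscale R 1 x = x;
 g_scalez : forall a, kscale R a (kzero R) = kzero R;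
 g_mem0 : kmem R (kzero R);
 g_mem1 : kmem R (kone R);
 g_memD : forall x y, kmem R x -> kmem R y -> kmem R (kadd R x y);
 g_memZ : forall a x, kmem R x -> kmem R (kscale R a x) }.

Lemma good_K : good (kalgK K).
Proof.
constructor; simpl; intros; auto.
- by rewrite addrA.
- by rewrite addrC.
- by rewrite add0r.
- by rewrite mulrDr.
- by rewrite mulrDl.
- by rewrite mulrA.
- by rewrite mul0r.
- by rewrite mul1r.
- by rewrite mulr0.
Qed.

Lemma good_Rsum (I : Type) (F : I -> kalg K) :
  (forall i, good (F i)) -> good (Rsum F).
Proof.
intro HF.
constructor; simpl; intros.
- apply functional_extensionality_dep; intro i; apply g_addA, HF.
- apply functional_extensionality_dep; intro i; apply g_addC, HF.
- apply functional_extensionality_dep; intro i; apply g_add0, HF.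
- apply functional_extensionality_dep; intro i; apply g_scaleDr, HF.
- apply functional_extensionality_dep; intro i; apply g_scaleDl, HF.
- apply functional_extensionality_dep; intro i; apply g_scaleA, HF.
- apply functional_extensionality_dep; intro i; apply g_scale0, HF.
- apply functional_extensionality_dep; intro i; apply g_scale1, HF.
- apply functional_extensionality_dep; intro i; apply g_scalez, HF.
- exists (fun i => kzero (F i)), 0, nil. split; [|split].
  + intro i; apply g_mem0, HF.
  + auto.
  + intro i. by rewrite (g_scale0 (HF i)) (g_add0 (HF i)).
- exists (fun i => kzero (F i)), 1, nil. split; [|split].
  + intro i; apply g_mem0, HF.
  + auto.
  + intro i. by rewrite (g_scale1 (HF i)) (g_add0 (HF i)).
- destruct H as (g & k & s & Hg & Hs & He).
  destruct H0 as (g' & k' & s' & Hg' & Hs' & He').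
  exists (fun i => kadd (F i) (g i) (g' i)), (k + k'), (s ++ s'). split; [|split].
  + intro i; apply (g_memD (HF i)); auto.
  + intros i Hi.
    have h1 : g i = kzero (F i) by apply Hs; intro; apply Hi; apply in_or_app; auto.
    have h2 : g' i = kzero (F i) by apply Hs'; intro; apply Hi; apply in_or_app; auto.
    rewrite h1 h2. apply (g_add0 (HF i)).
  + intro i. rewrite He He' (g_scaleDl (HF i)).
    set a := g i; set b := kscale _ k _; set c := g' i; set d := kscale _ k' _.
    have HA := g_addA (HF i); have HC := g_addC (HF i).
    rewrite -!HA; congr (kadd _ a _). rewrite !HA; congr (kadd _ _ d). by rewrite HC.
- destruct H as (g & k & s & Hg & Hs & He).
  exists (fun i => kscale (F i) a (g i)), (a * k), s. split; [|split].
  + intro i; apply (g_memZ (HF i)); auto.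
  + intros i Hi. rewrite Hs //. apply (g_scalez (HF i)).
  + intro i. by rewrite He (g_scaleDr (HF i)) (g_scaleA (HF i)).
Qed.


Definition upd (I : Type) (P : I -> Type) (f : forall i, P i) (j : I) (x : P j) : forall i, P i :=
 fun i => match excluded_middle_informative (j = i) with
          | left e => eq_rect j P x i e | right _ => f i end.
Arguments upd {I P} f j x i.

Lemma upd_eq (I : Type) (P : I -> Type) f j x : @upd I P f j x j = x.
Proof.
unfold upd. destruct (excluded_middle_informative (j = j)) as [e|n].
- by rewrite (Eqdep.EqdepTheory.UIP_refl _ _ e).
- by destruct n.
Qed.

Lemma upd_neq (I : Type) (P : I -> Type) f j x i : j <> i -> @upd I P f j x i = f i.
Proof. unfold upd. destruct (excluded_middle_informative (j = i)); [contradiction|reflexivity]. Qed.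

Lemma Rsum_memi (I : Type) (F : I -> kalg K) f :
  (forall i, good (F i)) -> kmem (Rsum F) f -> forall i, kmem (F i) (f i).
Proof.
intros HF (g & k & s & Hg & Hs & He) i. rewrite He.
apply (g_memD (HF i)); auto. apply (g_memZ (HF i)), (g_mem1 (HF i)).
Qed.

Lemma lemL (I : Type) (F : I -> kalg K) (G : kalg K) (j : I) :
 (forall i, good (F i)) -> good G -> kalg_iso (F j) (kprod G (F j)) ->
 kalg_iso (Rsum F) (kprod G (Rsum F)).
Proof.
intros HF HG [psi [Pm [Pi [Ps [P1 [Padd [Pmul Pscale]]]]]]].
have memj := @Rsum_memi I F.
exists (fun f : forall i, car (F i) => (fst (psi (f j)), upd f j (snd (psi (f j))))).
split; [|split; [|split; [|split; [|split; [|split]]]]].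
- intros f Hf. split.
  + exact (proj1 (Pm _ (memj f HF Hf j))).
  + destruct Hf as (g & k & s & Hg & Hs & Hfe).
    exists (upd g j (snd (psi (g j)))), k, (j :: s). split; [|split].
    * intro i. destruct (excluded_middle_informative (j = i)) as [<-|n].
      -- rewrite upd_eq. exact (proj2 (Pm _ (Hg j))).
      -- rewrite upd_neq //.
    * intros i Hi. rewrite upd_neq. apply Hs; intro; apply Hi; right; auto.
      intro e; apply Hi; left; auto.
    * intro i. cbn [fst snd]. destruct (excluded_middle_informative (j = i)) as [<-|n].
      -- rewrite !upd_eq (Hfe j) Padd; [| apply Hg | apply (g_memZ (HF j)), (g_mem1 (HF j))].
         rewrite Pscale; [| apply (g_mem1 (HF j))]. rewrite P1. reflexivity.
      -- rewrite !upd_neq; try exact n; apply Hfe.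
- intros f f' Hf Hf' E. injection E as E1 E2.
  have E3 := f_equal (fun h => h j) E2. cbv beta in E3. rewrite !upd_eq in E3.
  have Ej : f j = f' j.
  { apply Pi; [apply memj; auto | apply memj; auto |].
    rewrite (surjective_pairing (psi (f j))) (surjective_pairing (psi (f' j))).
    rewrite E1 E3. reflexivity. }
  apply functional_extensionality_dep; intro i.
  destruct (excluded_middle_informative (j = i)) as [<-|n]; [exact Ej|].
  have E4 := f_equal (fun h => h i) E2. cbv beta in E4. rewrite !upd_neq in E4 => //.
- intros [x h] [Hx Hh]. cbn [fst snd] in Hx, Hh.
  have hjm := memj h HF Hh j.
  destruct (Ps (x, h j) (conj Hx hjm)) as [y [Hy Ey]].
  exists (upd h j y). split.
  + destruct Hh as (g & k & s & Hg & Hs & Hhe).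
    exists (upd g j (kadd (F j) y (kscale (F j) (-k) (kone (F j))))), k, (j :: s).
    split; [|split].
    * intro i. destruct (excluded_middle_informative (j = i)) as [<-|n].
      -- rewrite upd_eq. apply (g_memD (HF j)); auto. apply (g_memZ (HF j)), (g_mem1 (HF j)).
      -- rewrite upd_neq //.
    * intros i Hi. rewrite upd_neq. apply Hs; intro; apply Hi; right; auto.
      intro e; apply Hi; left; auto.
    * intro i. destruct (excluded_middle_informative (j = i)) as [<-|n].
      -- rewrite !upd_eq -(g_addA (HF j)) -(g_scaleDl (HF j)) addNr (g_scale0 (HF j)).
         by rewrite (g_addC (HF j)) (g_add0 (HF j)).
      -- rewrite !upd_neq; try exact n; apply Hhe.
  + rewrite upd_eq Ey. cbn [fst snd]. f_equal.
    apply functional_extensionality_dep; intro i.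
    destruct (excluded_middle_informative (j = i)) as [<-|n].
    * by rewrite upd_eq.
    * by rewrite !upd_neq.
- cbn [kone Rsum kprod]. rewrite P1. cbn [fst snd]. f_equal.
  apply functional_extensionality_dep; intro i.
  destruct (excluded_middle_informative (j = i)) as [<-|n].
  * by rewrite upd_eq.
  * by rewrite !upd_neq.
- intros f f' Hf Hf'. cbn [kadd Rsum kprod]. rewrite Padd; try (apply memj; auto).
  cbn [fst snd kadd kprod]. f_equal.
  apply functional_extensionality_dep; intro i.
  destruct (excluded_middle_informative (j = i)) as [<-|n].
  * by rewrite !upd_eq.
  * by rewrite !upd_neq.
- intros f f' Hf Hf'. cbn [kmul Rsum kprod]. rewrite Pmul; try (apply memj; auto).
  cbn [fst snd kmul kprod]. f_equal.
  apply functional_extensionality_dep; intro i.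
  destruct (excluded_middle_informative (j = i)) as [<-|n].
  * by rewrite !upd_eq.
  * by rewrite !upd_neq.
- intros a f Hf. cbn [kscale Rsum kprod]. rewrite Pscale; try (apply memj; auto).
  cbn [fst snd kscale kprod]. f_equal.
  apply functional_extensionality_dep; intro i.
  destruct (excluded_middle_informative (j = i)) as [<-|n].
  * by rewrite !upd_eq.
  * by rewrite !upd_neq.
Qed.


Lemma lemS (F : kalg K) : good F ->
  kalg_iso (Rsum (fun _ : nat => F)) (kprod F (Rsum (fun _ : nat => F))).
Proof.
intro HF.
have memj := @Rsum_memi nat (fun _ => F).
exists (fun f : nat -> car F => (f 0%N, fun n => f n.+1)).
split; [|split; [|split; [|split; [|split; [|split]]]]].
- intros f Hf. split.
  + exact (memj f (fun _ => HF) Hf 0%N).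
  + destruct Hf as (g & k & s & Hg & Hs & Hfe).
    exists (fun n => g n.+1), k, (map predn s). split; [|split].
    * intro i. apply Hg.
    * intros i Hi. apply Hs. intro H; apply Hi. change i with (predn i.+1). by apply in_map.
    * intro i. apply Hfe.
- intros f f' Hf Hf' E. injection E as E1 E2.
  apply functional_extensionality_dep; intros [|n]; [exact E1|].
  exact (f_equal (fun h => h n) E2).
- intros [x h] [Hx Hh]. cbn [fst snd] in Hx, Hh.
  exists (fun n => match n with 0%N => x | m.+1 => h m end). split; [|reflexivity].
  destruct Hh as (g & k & s & Hg & Hs & Hhe).
  exists (fun n => match n with 0%N => kadd F x (kscale F (-k) (kone F)) | m.+1 => g m end), k, (0%N :: map S s).
  split; [|split].
  + intros [|m]; [|apply Hg]. apply (g_memD HF); auto. apply (g_memZ HF), (g_mem1 HF).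
  + intros [|m] Hi; [destruct Hi; left; reflexivity|]. apply Hs. intro H; apply Hi; right. by apply in_map.
  + intros [|m]; [|apply Hhe].
    rewrite -(g_addA HF) -(g_scaleDl HF) addNr (g_scale0 HF).
    by rewrite (g_addC HF) (g_add0 HF).
- reflexivity.
- reflexivity.
- reflexivity.
- reflexivity.
Qed.

End Aux.

Lemma B1_eq (K : fieldType) (A : Type) (lt : A -> A -> Prop) (wf : well_founded lt) w :
  B1 K wf w = @Bstep K A lt w (fun v _ => B1 K wf v).
Proof.
unfold B1. apply (@Fix_eq _ _ (wf_ltO wf) (fun _ => kalg K) (@Bstep K A lt)). intros x f g H.
assert (f = g) as ->; [|reflexivity].
apply functional_extensionality_dep; intro y; apply functional_extensionality_dep; intro p; apply H.
Qed.

Lemma good_B (K : fieldType) (A : Type) (lt : A -> A -> Prop) (wf : well_founded lt) :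
  forall w, good (B1 K wf w).
Proof.
intro w. induction w as [w IH] using (well_founded_ind (wf_ltO wf)).
rewrite B1_eq. unfold Bstep.
destruct (excluded_middle_informative _) as [Hex|Hno]; [|apply good_K].
destruct (excluded_middle_informative _) as [Hm|Hnm].
- cbv zeta. apply good_Rsum. intro i. apply IH. exact (proj1 (proj2_sig (constructive_indefinite_description _ Hm))).
- apply good_Rsum. intros [v Hv]. apply IH. exact Hv.
Qed.

Lemma ltO_total (A : Type) (lt : A -> A -> Prop)
    (lt_total : forall x y, lt x y \/ x = y \/ lt y x) :
  forall x y : option A, ltO lt x y \/ x = y \/ ltO lt y x.
Proof.
intros [x|] [y|]; simpl; auto.
destruct (lt_total x y) as [h|[h|h]]; auto. subst; auto.
Qed.

Lemma mainP (K : fieldType) (A : Type) (lt : A -> A -> Prop)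
    (wf : well_founded lt)
    (lt_total : forall x y, lt x y \/ x = y \/ lt y x) :
  forall w v, ltO lt v w -> kalg_iso (B1 K wf w) (kprod (B1 K wf v) (B1 K wf w)).
Proof.
intro w. induction w as [w IH] using (well_founded_ind (wf_ltO wf)).
intros v Hvw.
rewrite (@B1_eq K A lt wf w). unfold Bstep.
destruct (excluded_middle_informative _) as [Hex|Hno]; [|exfalso; apply Hno; exists v; exact Hvw].
destruct (excluded_middle_informative _) as [Hm|Hnm].
- cbv zeta. destruct (constructive_indefinite_description _ Hm) as [m [Hmw Hmax]].
  cbn [proj1_sig].
  destruct (ltO_total lt_total v m) as [Hvm | [-> | Hmv]].
  + eapply lemL with (j := 0%N); [intro; apply good_B | apply good_B | exact (IH m Hmw v Hvm)].
  + apply lemS, good_B.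
  + exfalso; exact (Hmax v Hvw Hmv).
- have [u [Huw Hvu]] : exists u, ltO lt u w /\ ltO lt v u.
  { destruct (excluded_middle_informative (exists u, ltO lt u w /\ ltO lt v u)) as [h|h]; auto.
    exfalso; apply Hnm; exists v; split; auto. intros u Hu Hvu; apply h; eauto. }
  eapply lemL with (j := exist _ u Huw); [intros [x Hx]; apply good_B | apply good_B | exact (IH u Huw v Hvu)].
Qed.

Theorem corollary6p10 (K : fieldType) (A : Type) (lt : A -> A -> Prop)
    (wf : well_founded lt)
    (lt_trans : forall x y z, lt x y -> lt y z -> lt x z)
    (lt_total : forall x y, lt x y \/ x = y \/ lt y x)
    (A_countable : exists f : A -> nat, forall x y, f x = f y -> x = y)
    (b : A) :
  kalg_iso (B1 K wf None) (kprod (B1 K wf (Some b)) (B1 K wf None)).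
Proof.
exact (@mainP K A lt wf lt_total None (Some b) I).
Qed.
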